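(* Let $R$ be a discrete $\Gamma$-ring, $r\in R[2]$ a formal difference law, $n\ge0$, and $f:[2^n]\to[k]$ a pointed map with $f(\pm1_n)=(n_1,\dots,n_k)\in H\mathbb Z[k]$. Let $S\subseteq\{1,\dots,2^n\}$ be a subset such that for each $m\in\{1,\dots,k\}$ the set $S\cap f^{-1}(m)$ consists of exactly $|n_m|$ elements, all of which carry the sign of $n_m$ in $\pm1_n$ (i.e. lie in $A_+$ if $n_m>0$ and in $A_-$ if $n_m<0$). Let $g:[2^n]\to[k]$ be the pointed map which agrees with $f$ on $S$ and sends all other elements to $0$. Then $f(r^n)=g(r^n)$ in $R[k]$.
   Context: Let $[n]=\{0,1,\dots,n\}$, pointed at $0$. A $\Gamma$-space is a functor $F$ from the finite pointed sets $[n]$ (with pointed maps) to pointed simplicial sets with $F[0]$ a point; for a pointed map $f$ we write $f$ also for $F(f)$; $\Sigma_n$ acts on $F[n]$ via permutations of $\{1,\dots,n\}$. We identify $[n]\wedge[m]$ with $[nm]$ via $i\wedge j\mapsto (j-1)n+i$. A $\Gamma$-ring is a $\Gamma$-space $R$ with unit $1\in R[1]$ and associative unital multiplication given by natural maps $R(K)\wedge R(L)\to R(K\wedge L)$, $p\wedge q\mapsto pq$; it is discrete if all $R(K)$ are sets; $0\in R[1]$ denotes the basepoint. For $x\in R[2]$, $x^k\in R[2^k]$ is the $k$-fold product. Maps: $p^n_i:[n]\to[n-1]$, $p^n_i(j)=j$ ($j<i$), $p^n_i(i)=0$, $p^n_i(j)=j-1$ ($j>i$); for $1\le i<j\le n$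 and $1\le k\le n-1$, $s^n_{i,j,k}:[n]\to[n-1]$ sends $0\mapsto0$, $i,j\mapsto k$, and the remaining elements order-preservingly and bijectively onto $\{1,\dots,n-1\}\setminus\{k\}$; $d^n_j:[n-1]\to[n]$ is the order-preserving injection missing $j$. $H\mathbb{Z}(K)$ is the reduced free abelian group on $K$ (so $H\mathbb Z[k]=\mathbb Z^k$), pointed maps acting by summing coefficients along fibres, with multiplication $(\sum a_k k)(\sum b_l l)=\sum a_kb_l (k\wedge l)$; $\pm1_n=(1,-1)^n\in H\mathbb{Z}[2^n]$. For $k\ge1$, split $\{1,\dots,2^k\}=A_+\sqcup A_-$ where $i\in A_+$ iff the binary expansion of $i-1$ has an even number of digits $1$; $\pm1_k$ has entry $+1$ on $A_+$ and $-1$ on $A_-$. The special action of $\Sigma_{2^{k-1}}\times\Sigma_{2^{k-1}}$ on $F[2^k]$ is the action of the group of permutations of $\{1,\dots,2^k\}$ preserving $A_+$ and $A_-$. Let $\sigma$ be the nontrivial element of $\Sigma_2$. A formal difference law in $R$ is $r\in R[2]$ such that: (1) $p^2_2(r)=1$ and $s^2_{1,2,1}(r)=0$; (2) $p^2_1(r)\,r=r\,p^2_1(r)=\sigma(r)$ in $R[2]$; (3) for every $k\ge1$, $r^k$ is fixed under the special action; (4) for every $k\ge1$, all $1\le i<j\le 2^k$ with one of $i,j$ in $A_+$ and the other in $A_-$, and all $1\le l\le 2^k-1$: $s^{2^k}_{i,j,l}(r^k)=d^{2^k-1}_l\,p^{2^k-1}_i\,p^{2^k}_j(r^k)$. *)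

(* Defs.v *)
From HB Require Import structures.
From mathcomp Require Import all_boot all_order all_algebra.
Set Implicit Arguments. Unset Strict Implicit. Unset Printing Implicit Defensive.
Import Order.TTheory GRing.Theory Num.Theory.

(* Pointed maps [n] -> [m], where [n] = {0,...,n} = 'I_n.+1, pointed at 0. *)
Definition pmor (n m : nat) :=
  {f : {ffun 'I_n.+1 -> 'I_m.+1} | f ord0 == ord0}.

Definition pfun n m (f : pmor n m) : 'I_n.+1 -> 'I_m.+1 := fun i => sval f i.
Coercion pfun : pmor >-> Funclass.

Lemma mkp_subproof n m (h : 'I_n.+1 -> 'I_m.+1) :
  [ffun i : 'I_n.+1 => if i == ord0 then ord0 else h i] ord0 == ord0.
Proof. by rewrite ffunE eqxx. Qed.

Definition mkp n m (h : 'I_n.+1 -> 'I_m.+1) : pmor n m :=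
  exist _ [ffun i : 'I_n.+1 => if i == ord0 then ord0 else h i] (mkp_subproof h).

Definition nmap n m (h : nat -> nat) : pmor n m :=
  mkp (fun i : 'I_n.+1 => @inord m (h (val i))).

Definition pid n : pmor n n := mkp id.
Definition pcomp n m l (g : pmor m l) (f : pmor n m) : pmor n l :=
  mkp (fun i => g (f i)).
Definition pcast n m (e : n = m) : pmor n m := nmap n m id.

(* f /\ g : [n] /\ [m] -> [n'] /\ [m'], using [n] /\ [m] = [nm],
   i /\ j |-> (j-1) n + i *)
Definition psmash n m n' m' (f : pmor n n') (g : pmor m m') : pmor (n * m) (n' * m') :=
  nmap (n * m) (n' * m') (fun x =>
    let i := (x.-1 %% n).+1 in
    let j := (x.-1 %/ n).+1 in
    let fi := val (f (@inord n i)) in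
    let gj := val (g (@inord m j)) in
    if (fi == 0) || (gj == 0) then 0 else gj.-1 * n' + fi).

(* Discrete Gamma-rings: Gamma-spaces with values in pointed sets, with unit
   and associative unital natural multiplication R[n] /\ R[m] -> R[nm]. *)
Record GammaRing := {
  car :> nat -> Type;
  base : forall n, car n;
  act : forall n m, pmor n m -> car n -> car m;
  car0 : forall x : car 0, x = base 0;
  act_base : forall n m (f : pmor n m), act f (base n) = base m;
  act_id : forall n (x : car n), act (pid n) x = x;
  act_comp : forall n m l (f : pmor n m) (g : pmor m l) (x : car n),
      act g (act f x) = act (pcomp g f) x;
  one : car 1;
  mul : forall n m, car n -> car m -> car (n * m);
  mul_base_l : forall n m (q : car m), mul (base n) q = base (n * m);
  mul_base_r : forall n m (p : car n), mul p (base m) = base (n * m);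
  mul_natural : forall n m n' m' (f : pmor n n') (g : pmor m m') p q,
      mul (act f p) (act g q) = act (psmash f g) (mul p q);
  mul1r : forall n (p : car n), mul one p = act (pcast (esym (mul1n n))) p;
  mulr1 : forall n (p : car n), mul p one = act (pcast (esym (muln1 n))) p;
  mulA : forall n m l (p : car n) (q : car m) (s : car l),
      act (pcast (mulnA n m l)) (mul p (mul q s)) = mul (mul p q) s
}.
Arguments base {R} n : rename.
Arguments act {R n m} f x : rename.
Arguments one {R} : rename.
Arguments mul {R n m} p q : rename.

Fixpoint rpow (R : GammaRing) (x : R 2) (k : nat) : R (2 ^ k) :=
  match k as k0 return R (2 ^ k0) with
  | 0 => act (pcast (esym (expn0 2))) one
  | k'.+1 => act (pcast (esym (expnSr 2 k'))) (mul (rpow x k') x)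
  end.

Definition pp n i : pmor n n.-1 :=
  nmap n n.-1 (fun x => if x < i then x else if x == i then 0 else x.-1).
Definition dd n j : pmor n.-1 n :=
  nmap n.-1 n (fun x => if x < j then x else x.+1).
Definition ss n i j k : pmor n n.-1 :=
  nmap n n.-1 (fun x =>
    if (x == i) || (x == j) then k
    else let r := x - (i < x) - (j < x) in if r < k then r else r.+1).
Definition sigma2 : pmor 2 2 := nmap 2 2 (fun x => 3 - x).

Definition popcount (x : nat) : nat := \sum_(j < x.+1) odd (x %/ 2 ^ j).
Definition Aplus (i : nat) : bool := ~~ odd (popcount i.-1).
(* entry of +-1_n at position i (i >= 1) *)
Definition pm1 (i : nat) : int := if Aplus i then 1%R else (-1)%R.

Definition formal_difference_law (R : GammaRing) (r : R 2) : Prop :=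
  (act (pp 2 2) r = one /\ act (ss 2 1 2 1) r = base 1) /\
  (mul (act (pp 2 1) r) r = act sigma2 r /\ mul r (act (pp 2 1) r) = act sigma2 r) /\
  (forall k, 0 < k ->
     forall f : pmor (2 ^ k) (2 ^ k), injective f ->
       (forall x : 'I_(2 ^ k).+1, x != ord0 -> Aplus (f x) = Aplus x) ->
       act f (rpow r k) = rpow r k) /\
  (forall k, 0 < k -> forall i j l : nat,
     1 <= i -> i < j -> j <= 2 ^ k -> Aplus i != Aplus j ->
     1 <= l -> l <= (2 ^ k).-1 ->
     act (ss (2 ^ k) i j l) (rpow r k) =
       act (dd (2 ^ k).-1 l) (act (pp (2 ^ k).-1 i) (act (pp (2 ^ k) j) (rpow r k)))).

(* f(+-1_n) in HZ[k]: the m-th coordinate *)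
Definition push_pm1 n k (f : pmor (2 ^ n) k) (m : 'I_k.+1) : int :=
  (\sum_(x : 'I_(2 ^ n).+1 | (x != ord0) && (f x == m)) pm1 x)%R.

Definition restrict n k (f : pmor n k) (S : {set 'I_n.+1}) : pmor n k :=
  mkp (fun x => if x \in S then f x else ord0).

(* Main.v *)
Require Import Defs.
From HB Require Import structures.
From mathcomp Require Import all_boot all_order all_algebra zify.
Import Order.TTheory GRing.Theory Num.Theory.

Lemma pmor_ext n m (f g : pmor n m) : (forall x, f x = g x) -> f = g.
Proof. move=> H; apply: val_inj; apply/ffunP => x; exact: H. Qed.

Lemma pmor0 n m (f : pmor n m) : f ord0 = ord0.
Proof. exact/eqP/(proj2_sig f). Qed.

Lemma mkpE n m (h : 'I_n.+1 -> 'I_m.+1) x : mkp h x = if x == ord0 then ord0 else h x.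
Proof. by rewrite /pfun /= ffunE. Qed.

Lemma pcompE n m l (g : pmor m l) (f : pmor n m) x : Defs.pcomp g f x = g (f x).
Proof. rewrite /Defs.pcomp mkpE; case: eqP => [->|//]; by rewrite !pmor0. Qed.

Lemma nmapE n m h (x : 'I_n.+1) : val (nmap n m h x) =
  if val x == 0 then 0 else if h (val x) < m.+1 then h (val x) else 0.
Proof.
rewrite /nmap mkpE -(inj_eq val_inj) /=.
by case: (val x == 0) => //; rewrite /inord val_insubd.
Qed.

Definition tnat i j y := if y == 1 then i else
  let z := y.-1 in if z < i then z else if z.+1 < j then z.+1 else z.+2.

Definition snat i j (x : nat) := if (x == i) || (x == j) then 1
    else let r := x - (i < x) - (j < x) in if r < 1 then r else r.+1.

Lemma snat_ok N i j v : 1 <= i -> i < j -> j <= N -> 1 <= v <= N -> v != i -> v != j ->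
  1 <= snat i j v <= N.-1 /\ snat i j v != 1 /\ tnat i j (snat i j v) = v.
Proof.
move=> *; rewrite /snat /tnat.
case: (v =P i) => [|_]; first by lia. case: (v =P j) => [|_]; first by lia.
case: (ltnP i v) => ?; case: (ltnP j v) => ? /=;
repeat (case: ifP => ? /=); lia.
Qed.

Ltac ifs := repeat (case: ifP => ? //=); try lia.

Definition pnat i v := if v < i then v else if v == i then 0 else v.-1.
Definition dnat l v := if v < l then v else v.+1.

Lemma val_pp n i (x : 'I_n.+1) : 1 <= i <= n -> val (pp n i x) = pnat i (val x).
Proof.
move=> *; move: (ltn_ord x); rewrite nmapE /pnat /=; move: (nat_of_ord x) => v ?; case: (ltngtP v i) => ? /=; ifs.
Qed.

Lemma val_dd n l (x : 'I_n.-1.+1) : 1 <= l -> val (dd n l x) = if val x == 0 then 0 else dnat l (val x).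
Proof.
move=> *; move: (ltn_ord x); rewrite nmapE /dnat /=; move: (nat_of_ord x) => v ?.
case: (ltngtP v l) => ? /=; ifs.
Qed.

Lemma val_ss n i j (x : 'I_n.+1) : 1 <= i -> i < j -> j <= n ->
   val (ss n i j 1 x) = if val x == 0 then 0 else snat i j (val x).
Proof.
move=> *; move: (ltn_ord x); rewrite nmapE -/(snat i j (val x)) /=; move: (nat_of_ord x) => v ?.
case: ifP => // /negbT ?.
case: (eqVneq v i) => ?; first by subst; rewrite /snat eqxx /=; ifs.
case: (eqVneq v j) => ?; first by subst; rewrite /snat eqxx orbT /=; ifs.
have [? _] := @snat_ok n i j v ltac:(lia) ltac:(lia) ltac:(lia) ltac:(lia) ltac:(lia) ltac:(lia).
ifs.
Qed.

Lemma chain_val N i j (x : 'I_N.+1) : 1 <= i -> i < j -> j <= N ->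
  val (Defs.pcomp (dd N.-1 1) (Defs.pcomp (pp N.-1 i) (pp N j)) x) =
  if (val x == 0) || (val x == i) || (val x == j) then 0 else snat i j (val x).
Proof.
move=> *; rewrite !pcompE val_dd // val_pp ?val_pp; try lia.
move: (val x) => v.
have pl : forall i v, v < i -> pnat i v = v by move=> ? ? ?; rewrite /pnat; ifs.
have pe : forall i, pnat i i = 0 by move=> ?; rewrite /pnat ltnn eqxx.
have pg : forall i v, i < v -> pnat i v = v.-1 by move=> ? ? ?; rewrite /pnat; ifs.
rewrite /snat /dnat.
case: (ltngtP v j) => ?.
- rewrite (pl j v) //; case: (ltngtP v i) => ?.
  + rewrite (pl i v) //; ifs.
  + rewrite (pg i v) //; ifs.
  + subst; rewrite pe; ifs.
- rewrite (pg j v) // (pg i v.-1); last lia. ifs.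
- subst; rewrite pe (pl i 0) //; ifs.
Qed.

Definition kill {n k} (f : pmor n k) (a b : 'I_n.+1) : pmor n k :=
  mkp (fun x => if (x == a) || (x == b) then ord0 else f x).

Lemma pair_kill (R : GammaRing) (r : R 2) n k (f : pmor (2^n) k) (a b : 'I_(2^n).+1) :
  formal_difference_law r -> a != ord0 -> a < b -> Aplus a != Aplus b -> f a = f b ->
  act f (rpow r n) = act (kill f a b) (rpow r n).
Proof.
move=> [_ [_ [_ H4]]] a0 ab hA fab.
have hb := ltn_ord b.
have a1 : 0 < a by rewrite lt0n; move: a0; rewrite -(inj_eq val_inj).
have N2 : 1 < 2 ^ n by lia.
have n0 : 0 < n by rewrite lt0n; apply/negP => /eqP e; move: N2; rewrite e.
pose h : pmor (2^n).-1 k := mkp (fun y => f (inord (tnat a b y))).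
have E1 : f = Defs.pcomp h (ss (2^n) a b 1).
  apply: pmor_ext => x; rewrite pcompE /h mkpE -!(inj_eq val_inj) /= val_ss; [|lia..].
  have hx := ltn_ord x; have vx : val x = x := erefl; rewrite vx.
  case: (eqVneq (x : nat) 0) => [x0|x0].
    have -> : x = ord0 by apply: val_inj.
    by rewrite pmor0.
  case: (eqVneq (x : nat) a) => [xa|xa].
    have -> : x = a by apply: val_inj.
    by rewrite /snat eqxx /= /tnat eqxx inord_val.
  case: (eqVneq (x : nat) b) => [xb|xb].
    have -> : x = b by apply: val_inj.
    by rewrite /snat eqxx orbT /= /tnat eqxx inord_val.
  have [s1 [_ s3]] := @snat_ok (2^n) a b x ltac:(lia) ltac:(lia) ltac:(lia) ltac:(lia) xa xb.
  have -> : (snat a b x == 0) = false by lia.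
  by rewrite s3 inord_val.
have E2 : kill f a b = Defs.pcomp h (Defs.pcomp (dd (2^n).-1 1) (Defs.pcomp (pp (2^n).-1 a) (pp (2^n) b))).
  apply: pmor_ext => x; rewrite pcompE.
  have := @chain_val (2^n) a b x ltac:(lia) ltac:(lia) ltac:(lia).
  set D := Defs.pcomp _ _ x => cv.
  rewrite /h /kill !mkpE -!(inj_eq val_inj) /= cv.
  have hx := ltn_ord x; have vx : val x = x := erefl; rewrite vx.
  case: (eqVneq (x : nat) 0) => [x0|x0] //=.
  case: (eqVneq (x : nat) a) => [xa|xa] //=.
  case: (eqVneq (x : nat) b) => [xb|xb] //=.
  have [s1 [_ s3]] := @snat_ok (2^n) a b x ltac:(lia) ltac:(lia) ltac:(lia) ltac:(lia) xa xb.
  have -> : (snat a b x == 0) = false by lia.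
  by rewrite s3 inord_val.
rewrite E2 {1}E1 -!act_comp H4 //; lia.
Qed.

Definition bal {n k} (f : pmor n k) (A : {set 'I_n.+1}) (m : 'I_k.+1) : int :=
  (\sum_(z in A) (if f z == m then pm1 z else 0))%R.

Lemma pm1_cases z : pm1 z = 1%R \/ pm1 z = (-1)%R.
Proof. by rewrite /pm1; case: ifP; [left|right]. Qed.

Lemma none_case {n k} {f : pmor n k} {S T : {set 'I_n.+1}} :
  S \subset T -> (forall x, x \in T :\: S -> f x = ord0) -> restrict f T = restrict f S.
Proof.
move=> sST h; apply: pmor_ext => z; rewrite /restrict !mkpE.
case: ifP => // _; case zS: (z \in S); first by rewrite (subsetP sST).
case zT: (z \in T) => //; apply: h; by rewrite inE zS zT.
Qed.

Lemma main_ind (R : GammaRing) (r : R 2) n k (f : pmor (2^n) k) (S : {set 'I_(2^n).+1}) :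
  formal_difference_law r -> forall c T, (#|T :\: S| <= c)%N -> S \subset T -> ord0 \notin T ->
  (forall m, m != ord0 -> bal f (T :\: S) m = 0%R) ->
  act (restrict f T) (rpow r n) = act (restrict f S) (rpow r n).
Proof.
move=> fdl; elim=> [|c IH] T hc sST t0 hbal.
  rewrite (none_case sST) // => x xTS.
  by move: hc; rewrite leqn0 => /eqP/cards0_eq e; rewrite e inE in xTS.
case: (pickP (fun x => (x \in T :\: S) && (f x != ord0))) => [x /andP[xTS fx]|none]; last first.
  rewrite (none_case sST) // => x xTS; have := none x; rewrite xTS /=.
  by move/negbFE/eqP.
have [xT xS] : x \in T /\ x \notin S by move: xTS; rewrite inE => /andP[].
case: (pickP (fun y => [&& y \in T :\: S, f y == f x & pm1 y == - pm1 x]%R)) =>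
   [y /and3P[yTS /eqP fyx /eqP pyx]|none]; last first.
  exfalso; move: (hbal _ fx); rewrite /bal.
  rewrite (eq_bigr (fun z => if f z == f x then pm1 x else 0%R)); last first.
    move=> z zTS; case: eqP => // fzx; have := none z; rewrite zTS fzx eqxx /=.
    by case: (pm1_cases z) => ->; case: (pm1_cases x) => -> //.
  rewrite -big_mkcondr sumr_const => /eqP; rewrite mulrn_eq0 => /orP[|].
    have : (0 < #|(fun i => (i \in T :\: S) && (f i == f x))|)%N.
      by apply/card_gt0P; exists x; rewrite unfold_in xTS eqxx.
    by rewrite lt0n => /negbTE ->.
  by case: (pm1_cases x) => ->.
have [yT yS] : y \in T /\ y \notin S by move: yTS; rewrite inE => /andP[].
have xy : (x : nat) != y.
  apply/negP => /eqP /val_inj e; move: pyx; rewrite e.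
  by case: (pm1_cases y) => -> /eqP.
have hA : Aplus x != Aplus y.
  move: pyx; rewrite /pm1; by case: (Aplus x); case: (Aplus y).
have n0 : forall z, z \in T -> z != ord0 by move=> z zT; apply: contraNneq t0 => <-.
set T' := T :\ x :\ y.
have E : act (restrict f T) (rpow r n) = act (restrict f T') (rpow r n).
  have -> : restrict f T' = kill (restrict f T) (if (x < y)%N then x else y) (if (x < y)%N then y else x).
    apply: pmor_ext => z; rewrite /T' /kill /restrict !mkpE !inE.
    case: (z == ord0) => //; case: (x < y)%N => /=; case: (z == x); case: (z == y); case: (z \in T) => //.
  apply: (@pair_kill R r n k (restrict f T) _ _ fdl).
  - by case: ifP => _; apply: n0.
  - by move: xy; case: (ltngtP x y).
  - by case: ifP => _; [|rewrite eq_sym].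
  - by case: (x < y)%N; rewrite /= /restrict !mkpE (negbTE (n0 _ xT)) (negbTE (n0 _ yT)) xT yT fyx.
rewrite E; apply: (IH T').
- have yx : y \in (T :\: S) :\ x by rewrite in_setD1 yTS andbT; apply: contra xy => /eqP->.
  have : (#|T' :\: S| <= #|(T :\: S) :\ x :\ y|)%N.
    apply: subset_leq_card; apply/subsetP => z; rewrite !inE.
    by case: (z \in S); case: (z \in T); case: (z == x); case: (z == y).
  move: hc; rewrite (cardsD1 x) xTS (cardsD1 y (_ :\ x)) yx; lia.
- apply/subsetP => z zS; rewrite !inE (subsetP sST) // andbT.
  by apply/andP; split; apply: contraTneq zS => ->.
- by rewrite !inE (negbTE t0) !andbF.
- move=> m m0; have := hbal m m0; rewrite /bal (big_setD1 x xTS).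
  have yx : y \in (T :\: S) :\ x by rewrite in_setD1 yTS andbT; apply: contra xy => /eqP->.
  rewrite (big_setD1 y yx) fyx.
  have -> : (T :\: S) :\ x :\ y = T' :\: S.
    apply/setP => z; rewrite !inE.
    by case: (z \in S); case: (z \in T); case: (z == x); case: (z == y).
  by case: ifP => _ /=; [rewrite pyx addrA subrr add0r | rewrite !add0r].
Qed.

Theorem lemma3p4p1 (R : GammaRing) (r : R 2) (n k : nat)
  (f : pmor (2 ^ n) k) (S : {set 'I_(2 ^ n).+1}) :
  formal_difference_law r ->
  ord0 \notin S ->
  (forall m : 'I_k.+1, m != ord0 ->
     #|[set x in S | f x == m]| = `|push_pm1 f m|%N /\
     (forall x, x \in S -> f x = m ->
        ((0 < push_pm1 f m)%R -> Aplus x) /\ ((push_pm1 f m < 0)%R -> ~~ Aplus x))) ->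
  act f (rpow r n) = act (restrict f S) (rpow r n).
Proof.
move=> fdl s0 H.
pose T0 : {set 'I_(2^n).+1} := [set z | z != ord0].
have E : f = restrict f T0.
  apply: pmor_ext => z; rewrite /restrict mkpE inE.
  by case: eqP => [->|]; rewrite ?pmor0.
rewrite {1}E.
have sST : S \subset T0.
  by apply/subsetP => z zS; rewrite inE; apply: contraNneq s0 => <-.
apply: (@main_ind R r n k f S fdl #|T0 :\: S| T0 (leqnn _) sST); first by rewrite inE eqxx.
move=> m m0; have [hc hs] := H m m0.
have := big_setID (aop := +%R) (idx := 0%R) S (fun z => if f z == m then pm1 z else 0%R) (A := T0).
rewrite (setIidPr sST) -/(bal f (T0 :\: S) m).
have -> : (\sum_(i in T0) (if f i == m then pm1 i else 0))%R = push_pm1 f m.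
  rewrite /push_pm1 big_mkcondr; apply: eq_bigl => z; by rewrite inE.
have -> : (\sum_(i in S) (if f i == m then pm1 i else 0))%R = push_pm1 f m.
  rewrite -big_mkcondr.
  rewrite (eq_bigl (fun z => z \in [set x in S | f x == m])); last by move=> z; rewrite inE.
  set p := push_pm1 f m in hc hs *.
  case: (ltrgt0P p) => hp.
  - rewrite (eq_bigr (fun _ => 1%R)); last first.
      move=> z; rewrite inE => /andP[zS /eqP fz]; rewrite /pm1 (proj1 (hs z zS fz) hp) //.
    rewrite sumr_const hc natz; lia.
  - rewrite (eq_bigr (fun _ => (-1)%R)); last first.
      move=> z; rewrite inE => /andP[zS /eqP fz]; rewrite /pm1 (negbTE (proj2 (hs z zS fz) hp)) //.
    rewrite sumr_const hc mulNrn natz; lia.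
  - rewrite hp in hc; rewrite (cards0_eq hc) big_set0 hp //.
move=> /eqP; rewrite -subr_eq0 opprD addrA subrr add0r oppr_eq0 => /eqP. done.
Qed.
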